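(* Let $(G,\delta)$ be a nilpotent $\mathbb Q$-scalable group of step $s$ that is generated as a group by $\{\delta_q(x_i):q\in\mathbb Q,1\le i\le r\}$ for some $x_1,\dots,x_r\in V_1(G)$. Then $G^{(s)}$, equipped with the $\mathbb Q$-vector space structure $\sigma$ (where $\sigma_q=\delta_q$ if $s=1$ and $\sigma_{n/m}(z)=\delta_m^{-1}(z^{nm^{s-1}})$ for $n\in\mathbb Z,m\in\mathbb N$ if $s\ge2$), is finite dimensional.
   Context: A $\mathbb Q$-scalable group is a group $G$ with a map $\delta\colon\mathbb Q\times G\to G$ such that $\delta_\lambda$ is an automorphism for $\lambda\ne0$, $\delta_\lambda\circ\delta_\mu=\delta_{\lambda\mu}$, and $\delta_0\equiv e_G$. $V_1(G):=\{p:\delta_{t+s}(p)=\delta_t(p)\delta_s(p)\ \forall t,s\in\mathbb Q\}$. $[g,h]=ghg^{-1}h^{-1}$; $G^{(1)}=G$, $G^{(k)}=\langle[G,G^{(k-1)}]\rangle$; step $s$ means $G^{(s+1)}=\{e\}\ne G^{(s)}$. The map $\sigma$ above is known to make the abelian group $G^{(s)}$ a $\mathbb Q$-vector space. *)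

(* Defs.v *)
From HB Require Import structures.
From mathcomp Require Import all_boot all_order all_algebra.
Set Implicit Arguments. Unset Strict Implicit. Unset Printing Implicit Defensive.
Import Order.TTheory GRing.Theory Num.Theory.

Section Defs.
Variables (G : Type) (mul : G -> G -> G) (inv : G -> G) (e : G).

Record is_group : Prop := IsGroup {
  mulA : forall x y z, mul x (mul y z) = mul (mul x y) z;
  mul1g : forall x, mul e x = x;
  mulg1 : forall x, mul x e = x;
  mulVg : forall x, mul (inv x) x = e;
  mulgV : forall x, mul x (inv x) = e }.

Definition is_group_hom (f : G -> G) : Prop :=
  forall x y, f (mul x y) = mul (f x) (f y).
Definition is_group_aut (f : G -> G) : Prop :=
  is_group_hom f /\ bijective f.

Definition Qscalable (delta : rat -> G -> G) : Prop :=
  [/\ (forall l : rat, l != 0%R -> is_group_aut (delta l)),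
      (forall (l m : rat) x, delta l (delta m x) = delta (l * m)%R x)
    & (forall x, delta 0%R x = e)].

Definition V1 (delta : rat -> G -> G) (p : G) : Prop :=
  forall t s : rat, delta (t + s)%R p = mul (delta t p) (delta s p).

Definition commg (g h : G) : G := mul (mul (mul g h) (inv g)) (inv h).

Inductive gen (S : G -> Prop) : G -> Prop :=
| gen_one : gen S e
| gen_in x : S x -> gen S x
| gen_mul x y : gen S x -> gen S y -> gen S (mul x y)
| gen_inv x : gen S x -> gen S (inv x).

(* lower central series: lcs 1 = G, lcs (k+1) = <[G, lcs k]>;
   lcs 0 is also set to G (unused convention) *)
Fixpoint lcs (k : nat) : G -> Prop :=
  match k with
  | 0 => fun _ => True
  | 1 => fun _ => True
  | k'.+1 => gen (fun z => exists g h, lcs k' h /\ z = commg g h)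
  end.

Definition nilpotent_step (s : nat) : Prop :=
  (forall x, lcs s.+1 x -> x = e) /\ (exists x, lcs s x /\ x <> e).

Definition zpow (x : G) (z : int) : G :=
  match z with
  | Posz n => iter n (mul x) e
  | Negz n => inv (iter n.+1 (mul x) e)
  end.

(* the scalar multiplication sigma on G^(s): sigma_q = delta_q if s = 1,
   and sigma_{n/m}(z) = delta_m^{-1}(z^(n m^(s-1))) if s >= 2, with
   q = n/m in lowest terms (n = numq q, m = denq q > 0);
   delta_m^{-1} = delta_{1/m} *)
Definition sigma (delta : rat -> G -> G) (s : nat) (q : rat) (z : G) : G :=
  if s == 1 then delta q z
  else delta ((denq q)%:~R^-1)%R (zpow z (numq q * (denq q) ^+ (s - 1))%R).

(* finite dimensionality of the Q-vector space (G^(s), mul, sigma):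
   it has a finite spanning family *)
Definition fin_dim_lcs (delta : rat -> G -> G) (s : nat) : Prop :=
  exists (k : nat) (zs : 'I_k -> G), (forall i, lcs s (zs i)) /\
    forall z, lcs s z -> exists qs : 'I_k -> rat,
      z = foldr (fun i acc => mul (sigma delta s (qs i) (zs i)) acc) e
                (enum 'I_k).

End Defs.

(* Main.v *)
Require Import Defs.
From HB Require Import structures.
From mathcomp Require Import all_boot all_order all_algebra.
From mathcomp Require Import ring zify.
Set Implicit Arguments. Unset Strict Implicit. Unset Printing Implicit Defensive.
Import Order.TTheory GRing.Theory Num.Theory.

Section Grp.
Variables (G : Type) (mul : G -> G -> G) (inv : G -> G) (e : G).
Hypothesis HG : is_group mul inv e.
Local Notation "a ° b" := (mul a b) (at level 40, left associativity).

Lemma gA a b c : a ° (b ° c) = a ° b ° c. Proof. exact: (Defs.mulA HG). Qed.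
Lemma g1 a : e ° a = a. Proof. exact: (Defs.mul1g HG). Qed.
Lemma g1r a : a ° e = a. Proof. exact: (Defs.mulg1 HG). Qed.
Lemma gV a : inv a ° a = e. Proof. exact: (Defs.mulVg HG). Qed.
Lemma gVr a : a ° inv a = e. Proof. exact: (Defs.mulgV HG). Qed.
Lemma gK a b : a ° b ° inv b = a. Proof. by rewrite -gA gVr g1r. Qed.
Lemma gKV a b : a ° inv b ° b = a. Proof. by rewrite -gA gV g1r. Qed.
Lemma gKl a b : a ° (inv a ° b) = b. Proof. by rewrite gA gVr g1. Qed.
Lemma gKVl a b : inv a ° (a ° b) = b. Proof. by rewrite gA gV g1. Qed.
Lemma gcancr a b c : a ° c = b ° c -> a = b.
Proof. by move=> h; rewrite -(gK a c) h gK. Qed.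
Lemma gcancl a b c : c ° a = c ° b -> a = b.
Proof. by move=> h; rewrite -(gKVl c a) h gKVl. Qed.
Lemma inv_uniq a b : a ° b = e -> a = inv b.
Proof. by move=> h; apply: (@gcancr _ _ b); rewrite h gV. Qed.
Lemma invK a : inv (inv a) = a.
Proof. by symmetry; apply: inv_uniq; rewrite gVr. Qed.
Lemma invM a b : inv (a ° b) = inv b ° inv a.
Proof. by symmetry; apply: inv_uniq; rewrite -gA gKVl gV. Qed.
Lemma inv1 : inv e = e.
Proof. by symmetry; apply: inv_uniq; rewrite g1. Qed.
Lemma idem_e a : a ° a = a -> a = e.
Proof. by move=> h; apply: (@gcancr _ _ a); rewrite h g1. Qed.

Definition hom (f : G -> G) := forall a b, f (a ° b) = f a ° f b.
Lemma hom_e f : hom f -> f e = e.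
Proof. by move=> hf; apply: idem_e; rewrite -hf g1. Qed.
Lemma hom_inv f : hom f -> forall a, f (inv a) = inv (f a).
Proof. by move=> hf a; apply: inv_uniq; rewrite -hf gV hom_e. Qed.
Lemma hom_commg f : hom f -> forall a b, f (Defs.commg mul inv a b) = Defs.commg mul inv (f a) (f b).
Proof. by move=> hf a b; rewrite /Defs.commg !hf !(hom_inv hf). Qed.

Definition centr a := forall g, a ° g = g ° a.
Lemma centrM a b : centr a -> centr b -> centr (a ° b).
Proof. by move=> ha hb g; rewrite -gA hb gA ha gA. Qed.
Lemma centrV a : centr a -> centr (inv a).
Proof.
move=> ha g; apply: (@gcancl _ _ a); by rewrite gA gVr g1 ha gKV.
Qed.
Lemma centr_e : centr e. Proof. by move=> g; rewrite g1 g1r. Qed.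
Lemma centr_aut f : hom f -> bijective f -> forall a, centr a -> centr (f a).
Proof.
move=> hf [f' _ K2] a ha g; by rewrite -(K2 g) -!hf ha.
Qed.

Local Notation zp := (Defs.zpow mul inv e).
Definition pw a n := iter n (mul a) e.
Lemma pwS a n : pw a n.+1 = a ° pw a n. Proof. by []. Qed.
Lemma pw_add a m n : pw a (m + n) = pw a m ° pw a n.
Proof. by elim: m => [|m IH]; rewrite ?g1 // addSn pwS IH gA. Qed.
Lemma pw_comm a m n : pw a m ° pw a n = pw a n ° pw a m.
Proof. by rewrite -!pw_add addnC. Qed.
Lemma pwSr a n : pw a n.+1 = pw a n ° a.
Proof. by rewrite -addn1 pw_add /pw /= g1r. Qed.
Lemma comm_inv a b : a ° b = b ° a -> inv a ° b = b ° inv a.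
Proof.
move=> h; apply: (@gcancl _ _ a); by rewrite gKl gA h gK.
Qed.

Lemma zp_sub a (m n : nat) : zp a (m%:Z - n%:Z) = pw a m ° inv (pw a n).
Proof.
case: (leqP n m) => hnm.
  have -> : (m%:Z - n%:Z = (m - n)%N%:Z)%R by lia.
  rewrite /= -/(pw a (m - n)).
  by rewrite -{2}(subnK hnm) pw_add gK.
have -> : (m%:Z - n%:Z = Negz (n - m).-1)%R by rewrite NegzE; lia.
rewrite /=; have := prednK (n:=n-m); rewrite subn_gt0 => /(_ hnm) E.
rewrite -pwS E.
rewrite -{2}(subnK (ltnW hnm)) pw_add invM gA gVr g1 //.
Qed.

Lemma int_sub (z : int) : exists m n : nat, z = (m%:Z - n%:Z)%R.
Proof.
case: z => [m|n]; first by exists m, 0%N; lia.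
by exists 0%N, n.+1; rewrite NegzE; lia.
Qed.

Lemma zpD a (u v : int) : zp a (u + v)%R = zp a u ° zp a v.
Proof.
have [m [n ->]] := int_sub u; have [m' [n' ->]] := int_sub v.
have -> : (m%:Z - n%:Z + (m'%:Z - n'%:Z) = (m + m')%N%:Z - (n + n')%N%:Z)%R by lia.
rewrite !zp_sub !pw_add invM.
have c1 : inv (pw a n) ° pw a m' = pw a m' ° inv (pw a n) by apply: comm_inv; exact: pw_comm.
have c2 : inv (pw a n) ° inv (pw a n') = inv (pw a n') ° inv (pw a n) by rewrite -!invM pw_comm.
rewrite -!gA; congr (_ ° _).
by rewrite [RHS]gA c1 -gA c2.
Qed.

Lemma zp0 a : zp a 0 = e. Proof. by []. Qed.
Lemma zp1 a : zp a 1 = a. Proof. by rewrite /= g1r. Qed.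
Lemma zpN a (u : int) : zp a (- u)%R = inv (zp a u).
Proof. by apply: inv_uniq; rewrite -zpD addNr. Qed.

Lemma zp_hom f : hom f -> forall a (u : int), f (zp a u) = zp (f a) u.
Proof.
move=> hf a u.
have hn : forall n : nat, f (zp a n) = zp (f a) n.
  elim=> [|n IH] /=; [exact: (hom_e hf)| by rewrite hf IH].
case: u => n; first exact: hn.
rewrite /= (hom_inv hf); congr inv; exact: (hn n.+1).
Qed.

Lemma zpM a (u v : int) : zp (zp a u) v = zp a (u * v)%R.
Proof.
have hn : forall n : nat, zp (zp a u) n = zp a (u * n%:Z)%R.
  elim=> [|n IH]; first by rewrite mulr0.
  rewrite /= -/(zp (zp a u) n) IH -zpD; congr zp; lia.
case: v => n; first exact: hn.
by rewrite NegzE zpN hn -zpN mulrN.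
Qed.

Lemma zp_inv a u : zp (inv a) u = inv (zp a u).
Proof.
have -> : inv a = zp a (-1) by rewrite zpN zp1.
by rewrite zpM mulN1r zpN.
Qed.

Lemma zp_e (u : int) : zp e u = e.
Proof.
have hn : forall n : nat, zp e n = e by elim=> [|n IH] //=; rewrite g1.
case: u => n; first exact: hn.
by rewrite NegzE zpN hn inv1.
Qed.

Lemma zp_central a u : centr a -> centr (zp a u).
Proof.
move=> ha.
have hn : forall n : nat, centr (zp a n).
  by elim=> [|n IH] /=; [exact: centr_e| exact: centrM].
case: u => n; first exact: hn.
by apply: centrV; apply: (hn n.+1).
Qed.

Lemma zp_mul_central a b u : centr a -> zp (a ° b) u = zp a u ° zp b u.
Proof.
move=> ha.
have hn : forall n : nat, zp (a ° b) n = zp a n ° zp b n.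
  elim=> [|n IH] /=; first by rewrite g1.
  rewrite -/(zp (a ° b) n) -/(zp a n) -/(zp b n) IH.
  rewrite -!gA; congr (_ ° _); rewrite !gA; congr (_ ° _).
  by rewrite (@zp_central a n ha).
case: u => n; first exact: hn.
by rewrite NegzE !zpN hn invM (centrV (@zp_central a n.+1 ha)).
Qed.

Local Notation cm := (Defs.commg mul inv).
Local Notation L k := (lcs mul inv e k).
Local Notation gn := (gen mul inv e).

Lemma gen_mono (S T : G -> Prop) : (forall y, S y -> T y) -> forall z, gn S z -> gn T z.
Proof.
move=> hST z; elim=> [|y /hST|y y' _ h1 _ h2|y _ h]; by constructor.
Qed.

Lemma L_e k : L k e.
Proof. by case: k => [|[|k]] //=; constructor. Qed.
Lemma L_mul k a b : L k a -> L k b -> L k (a ° b).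
Proof. by case: k => [|[|k]] //= ha hb; apply: gen_mul. Qed.
Lemma L_inv k a : L k a -> L k (inv a).
Proof. by case: k => [|[|k]] //= ha; apply: gen_inv. Qed.

Lemma conj_cm g a : g ° a ° inv g = cm g a ° a.
Proof. by rewrite /Defs.commg gKV. Qed.

Lemma L_normal k : forall g h, L k h -> L k (g ° h ° inv g).
Proof.
elim: k => [//|k IH] g h.
case: k IH => [//|k] IH /=.
elim=> [|y [a [b [hb ->]]]|y y' _ h1 _ h2|y _ h1].
- by rewrite g1r gVr; constructor.
- apply: gen_in; exists (g ° a ° inv g), (g ° b ° inv g); split; first exact: IH.
  rewrite /Defs.commg !invM !invK -!gA !gKVl.
  by rewrite !gA.
- have -> : g ° (y ° y') ° inv g = (g ° y ° inv g) ° (g ° y' ° inv g)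
    by rewrite -!gA gKVl.
  exact: gen_mul.
- have -> : g ° inv y ° inv g = inv (g ° y ° inv g) by rewrite !invM invK gA.
  exact: gen_inv.
Qed.

Lemma cm_L k g h : L k h -> L k.+1 (cm g h).
Proof.
case: k => [|k] // hh /=; apply: gen_in; by exists g, h.
Qed.

Lemma L_decr k z : L k.+1 z -> L k z.
Proof.
case: k => [//|k] hz; elim: hz => [|y [a [b [hb ->]]]|y y' _ h1 _ h2|y _ h1].
- exact: L_e.
- rewrite /Defs.commg; apply: L_mul => //; [exact: L_normal| exact: L_inv].
- exact: L_mul.
- exact: L_inv.
Qed.

Lemma L_le m n z : (m <= n)%N -> L n z -> L m z.
Proof.
move=> hmn; elim: n hmn => [|n IH] hmn hz.
  by move: hmn; rewrite leqn0 => /eqP ->.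
case: (ltngtP m n.+1) hmn => // h _; last by rewrite h.
by apply: IH; [exact: h | exact: L_decr].
Qed.

Lemma L_zp k a u : L k a -> L k (zp a u).
Proof.
move=> ha.
have hn : forall n : nat, L k (zp a n).
  by elim=> [|n IH] /=; [exact: L_e| exact: L_mul].
case: u => n; first exact: hn.
exact: (L_inv (hn n.+1)).
Qed.

Definition cong k u v := L k (u ° inv v).
Lemma cong_refl k u : cong k u u. Proof. by rewrite /cong gVr; exact: L_e. Qed.
Lemma cong_sym k u v : cong k u v -> cong k v u.
Proof. by move=> h; have := L_inv h; rewrite invM invK. Qed.
Lemma cong_trans k u v w : cong k u v -> cong k v w -> cong k u w.
Proof. by move=> h1 h2; rewrite /cong -(gKV u v) -gA; exact: L_mul. Qed.
Lemma cong_mul k u u' v v' : cong k u u' -> cong k v v' -> cong k (u ° v) (u' ° v').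
Proof.
move=> h1 h2; rewrite /cong invM.
have -> : u ° v ° (inv v' ° inv u') = (u ° (v ° inv v') ° inv u) ° (u ° inv u')
  by rewrite !gA gKV.
by apply: L_mul => //; exact: L_normal.
Qed.
Lemma cong_inv k u v : cong k u v -> cong k (inv u) (inv v).
Proof.
move=> h; rewrite /cong invK.
have -> : inv u ° v = inv u ° inv (u ° inv v) ° inv (inv u)
  by rewrite invK invM invK gA gKV.
by apply: L_normal; exact: L_inv.
Qed.
Lemma cong_ex k u v : cong k u v -> exists n, L k n /\ u = v ° n.
Proof.
move=> h; exists (inv v ° (u ° inv v) ° inv (inv v)); split; first exact: L_normal.
by rewrite invK !gA gVr g1 gKV.
Qed.
Lemma cong_ofL k u n : L k n -> cong k (u ° n) u.
Proof. by move=> h; apply: L_normal. Qed.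
Lemma cong_eL k n : L k n -> cong k n e.
Proof. by move=> h; rewrite /cong inv1 g1r. Qed.
Lemma cong_invr k a b : cong k (a ° b) e -> cong k a (inv b).
Proof. by move=> h; rewrite /cong invK; move: h; rewrite /cong inv1 g1r. Qed.
Lemma cong_zp k u v n : cong k u v -> cong k (zp u n) (zp v n).
Proof.
move=> h.
have hn : forall m : nat, cong k (zp u m) (zp v m).
  by elim=> [|m IH] /=; [exact: cong_refl| exact: cong_mul].
case: n => m; first exact: hn.
exact: (cong_inv (hn m.+1)).
Qed.

Lemma cm_mulr g h h' : cm g (h ° h') = cm g h ° (h ° cm g h' ° inv h).
Proof. by rewrite /Defs.commg !invM !gA gKV gKV. Qed.
Lemma cm_mull g g' h : cm (g ° g') h = (g ° cm g' h ° inv g) ° cm g h.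
Proof. by rewrite /Defs.commg !invM !gA gKV gKV. Qed.
Lemma cm_e_l h : cm e h = e. Proof. by rewrite /Defs.commg g1 inv1 g1r gVr. Qed.
Lemma cm_e_r g : cm g e = e. Proof. by rewrite /Defs.commg g1r gVr g1 inv1. Qed.

Lemma cong_conj k g a : L k a -> cong k.+1 (g ° a ° inv g) a.
Proof. by move=> h; rewrite /cong conj_cm gK; exact: cm_L. Qed.
Lemma cong_comm k a b : L k b -> cong k.+1 (a ° b) (b ° a).
Proof.
move=> h; rewrite /cong invM gA; exact: (cm_L a h).
Qed.

Lemma cm2 j g c1 c2 : L j c2 -> cong j.+2 (cm g (c1 ° c2)) (cm g c1 ° cm g c2).
Proof.
move=> h; rewrite cm_mulr; apply: cong_mul; first exact: cong_refl.
by apply: cong_conj; apply: cm_L.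
Qed.
Lemma cm1 j g g' c : L j c -> cong j.+2 (cm (g ° g') c) (cm g c ° cm g' c).
Proof.
move=> h; rewrite cm_mull.
apply: cong_trans (_ : cong _ _ (cm g' c ° cm g c)) _.
  by apply: cong_mul; [apply: cong_conj; apply: cm_L| exact: cong_refl].
by apply: cong_comm; apply: cm_L.
Qed.
Lemma cmc j g u v : cong j.+1 u v -> cong j.+2 (cm g u) (cm g v).
Proof.
move=> /cong_ex [n [hn ->]]; rewrite cm_mulr.
by apply: cong_ofL; apply: L_normal; apply: cm_L.
Qed.

Lemma zp_hom_mod (H : G -> Prop) k f :
  H e -> (forall a b, H a -> H b -> H (a ° b)) ->
  (forall a b, H b -> cong k (f (a ° b)) (f a ° f b)) ->
  forall u, H u -> forall n, cong k (f (zp u n)) (zp (f u) n).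
Proof.
move=> He HM hf u hu n.
have hpn : forall m : nat, H (zp u m) by elim=> [|m IH] //=; exact: HM.
have fe : cong k (f e) e.
  have := hf e e He; rewrite g1 /cong invM.
  by rewrite gA gVr g1 => /L_inv; rewrite invK inv1 g1r.
have hn : forall m : nat, cong k (f (zp u m)) (zp (f u) m).
  elim=> [|m IH] //=.
  apply: cong_trans (hf _ _ (hpn m)) _; exact: cong_mul (cong_refl _ _) IH.
case: n => m; first exact: hn.
rewrite /= -/(zp u m.+1) -/(zp (f u) m.+1).
apply: cong_trans (_ : cong _ _ (inv (f (zp u m.+1)))) _; last exact: cong_inv.
apply: cong_invr; apply: cong_trans fe; apply: cong_sym.
by have := hf (inv (zp u m.+1)) _ (hpn m.+1); rewrite gV.
Qed.

Fixpoint Cm (y : G) (l : seq G) : G :=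
  match l with [::] => y | y' :: l' => cm y (Cm y' l') end.

Lemma Cm_L y l : L (size l).+1 (Cm y l).
Proof.
elim: l y => [|y' l IH] y /=; first done.
exact: cm_L (IH _).
Qed.

Lemma hom_Cm f : hom f -> forall y l, f (Cm y l) = Cm (f y) (map f l).
Proof.
move=> hf y l; elim: l y => [|y' l IH] y //=.
by rewrite (hom_commg hf) IH.
Qed.

Definition pz (p : G * int) := zp p.1 p.2.
Definition prodz (l : seq (G * int)) := foldr (fun p acc => (p.2 * acc)%R) 1%R l.

Lemma Qmod l : forall y (a : int),
  cong (size l).+2 (Cm (zp y a) (map pz l)) (zp (Cm y (map fst l)) (a * prodz l)%R).
Proof.
elim: l => [|[y' a'] l IH] y a /=.
  rewrite mulr1; exact: cong_refl.
set c := Cm y' (map fst l).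
have hc : L (size l).+1 c by have := Cm_L y' (map fst l); rewrite size_map.
apply: cong_trans (_ : cong _ _ (cm (zp y a) (zp c (a' * prodz l)%R))) _.
  by apply: cmc; apply: IH.
apply: cong_trans (_ : cong _ _ (zp (cm (zp y a) c) (a' * prodz l)%R)) _.
  apply: (@zp_hom_mod (L (size l).+1)) => //.
  - exact: L_e.
  - move=> *; exact: L_mul.
  - move=> u v hv; exact: cm2.
apply: cong_trans (_ : cong _ _ (zp (zp (cm y c) a) (a' * prodz l)%R)) _.
  apply: cong_zp.
  apply: (@zp_hom_mod (fun _ => True) _ (fun g => cm g c)) => // u v _.
  exact: cm1.
rewrite zpM; exact: cong_refl.
Qed.

Section Span.
Variables (A : Type) (f : A -> G).
Hypothesis Hgen : forall g, gn (fun y => exists a, y = f a) g.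
Definition Tk k c := exists a0 (l : seq A), size l = k /\ c = Cm (f a0) (map f l).

Lemma genT_L k w : gn (Tk k) w -> L k.+1 w.
Proof.
elim=> [|c [a0 [l [hl ->]]]|y y' _ h1 _ h2|y _ h1].
- exact: L_e.
- by have := Cm_L (f a0) (map f l); rewrite size_map hl.
- exact: L_mul.
- exact: L_inv.
Qed.

Lemma span_step k g w : gn (Tk k) w ->
  exists w', gn (Tk k.+1) w' /\ cong k.+3 (cm g w) w'.
Proof.
have hg := Hgen g.
elim=> [|c hc|w1 w2 hw1 [u1 [hu1 c1]] hw2 [u2 [hu2 c2]]|w1 hw1 [u1 [hu1 c1]]].
- exists e; split; first exact: gen_one.
  by rewrite cm_e_r; exact: cong_refl.
- have hcL : L k.+1 c by apply: genT_L; apply: gen_in.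
  elim: hg => [|y [a ->]|g1 g2 _ [u1 [hu1 c1]] _ [u2 [hu2 c2]]|g1 _ [u1 [hu1 c1]]].
  + exists e; split; first exact: gen_one.
    by rewrite cm_e_l; exact: cong_refl.
  + exists (cm (f a) c); split; last exact: cong_refl.
    apply: gen_in; case: hc => [a0 [l [hl ->]]].
    by exists a, (a0 :: l); split => //=; rewrite hl.
  + exists (u1 ° u2); split; first exact: gen_mul.
    apply: cong_trans (cm1 _ _ hcL) _; exact: cong_mul.
  + exists (inv u1); split; first exact: gen_inv.
    apply: cong_trans (_ : cong _ _ (inv (cm g1 c))) _; last exact: cong_inv.
    apply: cong_invr; have := cm1 (inv g1) g1 hcL; rewrite gV cm_e_l => h.
    exact: cong_sym.
- exists (u1 ° u2); split; first exact: gen_mul.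
  apply: cong_trans (cm2 _ _ (genT_L hw2)) _; exact: cong_mul.
- exists (inv u1); split; first exact: gen_inv.
  apply: cong_trans (_ : cong _ _ (inv (cm g w1))) _; last exact: cong_inv.
  apply: cong_invr; have := cm2 g (inv w1) (genT_L hw1); rewrite gV cm_e_r => h.
  exact: cong_sym.
Qed.

Lemma span k z : L k.+1 z -> exists w, gn (Tk k) w /\ cong k.+2 z w.
Proof.
elim: k z => [|k IH] z hz.
  exists z; split; last exact: cong_refl.
  apply: gen_mono (Hgen z) => y [a ->]; by exists a, [::].
elim: hz => [|y [g [h [hh ->]]]|z1 z2 _ [u1 [hu1 c1]] _ [u2 [hu2 c2]]|z1 _ [u1 [hu1 c1]]].
- exists e; split; [exact: gen_one| exact: cong_refl].
- have [w [hw cw]] := IH h hh.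
  have [w' [hw' cw']] := span_step g hw.
  exists w'; split => //.
  apply: cong_trans cw'; exact: cmc.
- exists (u1 ° u2); split; [exact: gen_mul| exact: cong_mul].
- exists (inv u1); split; [exact: gen_inv| exact: cong_inv].
Qed.
End Span.

Section Fin.
Variables (k : nat) (zs : 'I_k -> G) (sgf : rat -> G -> G).
Hypothesis sadd : forall i q q', sgf q (zs i) ° sgf q' (zs i) = sgf (q + q')%R (zs i).
Hypothesis s0 : forall i, sgf 0%R (zs i) = e.
Hypothesis sc : forall i q, centr (sgf q (zs i)).

Definition F (qs : 'I_k -> rat) l := foldr (fun i acc => sgf (qs i) (zs i) ° acc) e l.

Lemma F_centr qs l : centr (F qs l).
Proof. elim: l => [|i l IH] /=; [exact: centr_e| exact: centrM]. Qed.

Lemma F_mul qs qs' qs'' l : (forall i, qs'' i = (qs i + qs' i)%R) ->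
  F qs l ° F qs' l = F qs'' l.
Proof.
move=> h; elim: l => [|i l IH] /=; first by rewrite g1.
rewrite -IH h -sadd -!gA; congr (_ ° _); rewrite !gA; congr (_ ° _).
exact: F_centr.
Qed.

Lemma F0 qs l : (forall i, qs i = 0%R) -> F qs l = e.
Proof. by move=> h; elim: l => [|i l IH] //=; rewrite IH h s0 g1. Qed.

Lemma F_single j q l : uniq l ->
  F (fun i => if i == j then q else 0%R) l = if j \in l then sgf q (zs j) else e.
Proof.
elim: l => [|i l IH] //= /andP [hi hu]; rewrite IH // in_cons.
case: (eqVneq i j) hi => [->|hij] hi /=.
  by rewrite (negbTE hi) g1r.
by rewrite s0 g1.
Qed.

Lemma rep_gen (T : G -> Prop) : (forall c, T c -> exists j q, c = sgf q (zs j)) ->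
  forall w, gn T w -> exists qs, w = F qs (enum 'I_k).
Proof.
move=> hT w; elim=> [|c /hT [j [q ->]]|w1 w2 _ [q1 ->] _ [q2 ->]|w1 _ [q1 ->]].
- exists (fun _ => 0%R); by rewrite F0.
- exists (fun i => if i == j then q else 0%R).
  by rewrite F_single ?enum_uniq // mem_enum.
- exists (fun i => (q1 i + q2 i)%R); exact: F_mul.
- exists (fun i => (- q1 i)%R); symmetry; apply: inv_uniq.
  rewrite (F_mul (qs'' := fun _ => 0%R)) ?F0 // => i; by rewrite addNr.
Qed.
End Fin.

Section Delta.
Variable delta : rat -> G -> G.
Hypothesis Hdelta : Qscalable mul e delta.
Local Open Scope ring_scope.

Lemma d_comp (l m : rat) y : delta l (delta m y) = delta (l * m)%R y.
Proof. by case: Hdelta. Qed.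
Lemma d0 y : delta 0%R y = e.
Proof. by case: Hdelta. Qed.
Lemma d_hom q : hom (delta q).
Proof.
case: Hdelta => Haut _ _; case: (eqVneq q 0%R) => [->|hq].
  by move=> a b; rewrite !d0 g1.
by case: (Haut q hq).
Qed.
Lemma d_bij q : q != 0%R -> bijective (delta q).
Proof. by case: Hdelta => Haut _ _ hq; case: (Haut q hq). Qed.
Lemma d_inj q : q != 0%R -> injective (delta q).
Proof. by move=> hq; apply: bij_inj; exact: d_bij. Qed.
Lemma d1 y : delta 1%R y = y.
Proof. by apply: (d_inj (oner_neq0 _)); rewrite d_comp mulr1. Qed.

Lemma V1_delta p q : V1 mul delta p -> V1 mul delta (delta q p).
Proof. by move=> hp t u; rewrite !d_comp mulrDl hp. Qed.

Lemma V1_zp p : V1 mul delta p -> forall a : int, delta a%:~R p = zp p a.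
Proof.
move=> hp.
have hn : forall n : nat, delta (n%:Z)%:~R p = zp p n.
  elim=> [|n IH]; first by rewrite d0.
  have -> : ((n.+1)%:Z)%:~R = (1 + (n%:Z)%:~R)%R :> rat by ring.
  by rewrite hp d1 IH.
case=> n; first exact: hn.
have -> : zp p (Negz n) = inv (zp p n.+1) by [].
apply: inv_uniq; rewrite -hn -hp -(d0 p); congr delta.
by rewrite NegzE; ring.
Qed.

Section Top.
Variable s' : nat.
Hypothesis Htop : forall z, L s'.+2 z -> z = e.

Lemma cong_top u v : cong s'.+2 u v -> u = v.
Proof. by move=> /Htop h; apply: (@gcancr _ _ (inv v)); rewrite h gVr. Qed.

Lemma centr_top z : L s'.+1 z -> centr z.
Proof.
move=> hz g; have /Htop h := @cm_L _ g _ hz.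
have h2 : g ° z ° inv g = z by apply: (@gcancr _ _ (inv z)); rewrite gVr; exact: h.
by rewrite -{1}h2 gKV.
Qed.

Lemma Qtop l y (a : int) : size l = s' ->
  Cm (zp y a) (map pz l) = zp (Cm y (map fst l)) (a * prodz l)%R.
Proof. by move=> hl; apply: cong_top; rewrite -hl; exact: Qmod. Qed.

Variables (r : nat) (x : 'I_r -> G).
Hypothesis HxV1 : forall i, V1 mul delta (x i).
Hypothesis Hgen : forall g, gn (fun y => exists (q : rat) (i : 'I_r), y = delta q (x i)) g.

Definition fx (p : rat * 'I_r) := delta p.1 (x p.2).
Lemma Hgen' g : gn (fun y => exists a, y = fx a) g.
Proof. by apply: gen_mono (Hgen g) => y [q [i ->]]; exists (q, i). Qed.

Lemma fx_V1 p : V1 mul delta (fx p).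
Proof. exact: V1_delta. Qed.

Lemma top_gen z : L s'.+1 z -> gn (Tk fx s') z.
Proof.
move=> hz; have [w [hw cw]] := span Hgen' hz.
by rewrite (cong_top cw).
Qed.

Lemma Kl w : L s'.+1 w -> forall t : int, delta t%:~R w = zp w (t ^+ s'.+1)%R.
Proof.
move=> /top_gen hw t; elim: hw => [|c [a0 [l [hl ->]]]|w1 w2 h1 IH1 h2 IH2|w1 h1 IH1].
- by rewrite (hom_e (d_hom _)) zp_e.
- rewrite (hom_Cm (d_hom _)) -map_comp (V1_zp (fx_V1 _)).
  have -> : map (delta t%:~R \o fx) l = map pz (map (fun p => (fx p, t)) l).
    rewrite -map_comp; apply: eq_map => p /=; exact: (V1_zp (fx_V1 _)).
  rewrite Qtop ?size_map // -map_comp.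
  have -> : map (fst \o (fun p => (fx p, t))) l = map fx l by [].
  congr zp.
  have -> : prodz (map (fun p => (fx p, t)) l) = (t ^+ size l)%R.
    by elim: l {hl} => [|p l IH] //=; rewrite IH exprS.
  by rewrite hl exprS.
- have c1 := centr_top (genT_L h1).
  by rewrite (d_hom _) IH1 IH2 zp_mul_central.
- by rewrite (hom_inv (d_hom _)) IH1 zp_inv.
Qed.

Local Notation sg := (sigma mul inv e delta s'.+1).

Lemma sig_lemma (hs : (0 < s')%N) z (M A : int) q : L s'.+1 z -> 0 < M ->
  q * M%:~R ^+ s'.+1 = A%:~R -> sg q z = delta (M%:~R)^-1 (zp z A).
Proof.
move=> hz hM hA; rewrite /sigma.
have -> : (s'.+1 == 1%N) = false by case: s' hs.
rewrite subn1 /=.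
set m := denq q; set n := numq q.
have hm : m%:~R != 0 :> rat by rewrite intr_eq0 gt_eqF // denq_gt0.
have hM0 : M%:~R != 0 :> rat by rewrite intr_eq0 gt_eqF.
have hmM : (m%:~R * M%:~R) != 0 :> rat by rewrite mulf_neq0.
apply: (d_inj hmM); rewrite !d_comp.
have -> : m%:~R * M%:~R * (m%:~R)^-1 = M%:~R :> rat by field.
have -> : m%:~R * M%:~R * (M%:~R)^-1 = m%:~R :> rat by field.
rewrite Kl; last exact: L_zp.
rewrite Kl; last exact: L_zp.
rewrite !zpM; congr zp.
apply: (@intr_inj rat); rewrite !rmorphM !rmorphXn /= -hA.
rewrite /n numqE -/m !exprS; ring.
Qed.

Lemma sig_add (hs : (0 < s')%N) z q q' : L s'.+1 z -> sg q z ° sg q' z = sg (q + q') z.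
Proof.
move=> hz.
set M := denq q * denq q'.
have hM : 0 < M by rewrite mulr_gt0 // denq_gt0.
set A := numq q * denq q' * M ^+ s'.
set A' := numq q' * denq q * M ^+ s'.
have eA : q * M%:~R ^+ s'.+1 = A%:~R.
  by rewrite /A /M !rmorphM !rmorphXn !rmorphM /= !numqE !exprS; ring.
have eA' : q' * M%:~R ^+ s'.+1 = A'%:~R.
  by rewrite /A' /M !rmorphM !rmorphXn !rmorphM /= !numqE !exprS; ring.
rewrite (sig_lemma hs hz hM eA) (sig_lemma hs hz hM eA') -(d_hom _) -zpD.
symmetry; apply: sig_lemma => //.
by rewrite rmorphD /= -eA -eA' mulrDl.
Qed.

Lemma sig0 (hs : (0 < s')%N) z : L s'.+1 z -> sg 0 z = e.
Proof.
move=> hz; rewrite (@sig_lemma hs z 1 0) //; last by rewrite mul0r.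
exact: (hom_e (d_hom _)).
Qed.

Lemma sig_centr (hs : (0 < s')%N) z q : L s'.+1 z -> centr (sg q z).
Proof.
move=> hz.
set M := denq q.
have hM : 0 < M by rewrite denq_gt0.
have eA : q * M%:~R ^+ s'.+1 = (numq q * M ^+ s')%:~R.
  by rewrite rmorphM rmorphXn /= numqE !exprS; ring.
rewrite (sig_lemma hs hz hM eA).
apply: centr_aut; [exact: d_hom| |].
  by apply: d_bij; rewrite invr_eq0 intr_eq0 gt_eqF.
by apply: zp_central; apply: centr_top.
Qed.

Lemma ex_den (l : seq rat) : exists M : int, 0 < M /\
  forall q, q \in l -> (numq (q * M%:~R))%:~R = q * M%:~R.
Proof.
have Hi : forall (u : rat) (a : int), u = a%:~R -> (numq u)%:~R = u.
  by move=> u a ->; rewrite numq_int.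
elim: l => [|q l [M [hM hl]]]; first by exists 1.
exists (denq q * M); split; first by rewrite mulr_gt0 // denq_gt0.
move=> q0; rewrite in_cons => /orP [/eqP ->|hq0].
  apply: (Hi _ (numq q * M)); by rewrite !rmorphM /= numqE; ring.
apply: (Hi _ (denq q * numq (q0 * M%:~R))).
by rewrite !rmorphM /= hl //; ring.
Qed.

Definition prodq (l : seq (rat * 'I_r)) := foldr (fun p acc => p.1 * acc) 1 l.

Lemma prodz_eq (M : int) l :
  (forall p, p \in l -> (numq (p.1 * M%:~R))%:~R = p.1 * M%:~R) ->
  (prodz (map (fun p => (x p.2, numq (p.1 * M%:~R))) l))%:~R = prodq l * M%:~R ^+ size l.
Proof.
elim: l => [|p l IH] h /=; first by rewrite mulr1.
rewrite rmorphM /= h ?mem_head // IH; last by move=> p' hp'; apply: h; rewrite in_cons hp' orbT.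
by rewrite exprS; ring.
Qed.

Lemma gen_sig (hs : (0 < s')%N) a0 l : size l = s' ->
  Cm (fx a0) (map fx l) = sg (a0.1 * prodq l) (Cm (x a0.2) (map x (map snd l))).
Proof.
move=> hl.
have [M [hM hMl]] := ex_den (a0.1 :: map fst l).
set l2 := map (fun p => (x p.2, numq (p.1 * M%:~R))) l.
set c := Cm (fx a0) (map fx l).
have hf : forall p, p.1 \in a0.1 :: map fst l ->
    delta M%:~R (fx p) = zp (x p.2) (numq (p.1 * M%:~R)).
  by move=> p hp; rewrite /fx d_comp -V1_zp // (hMl _ hp) mulrC.
have e1 : delta M%:~R c = zp (Cm (x a0.2) (map x (map snd l))) (numq (a0.1 * M%:~R) * prodz l2).
  rewrite /c (hom_Cm (d_hom _)) hf ?mem_head //.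
  have -> : map (delta M%:~R) (map fx l) = map pz l2.
    rewrite /l2 -!map_comp; apply/eq_in_map => p hp /=.
    by rewrite hf // in_cons map_f ?orbT.
  rewrite Qtop ?size_map //; congr zp; congr Cm.
  by rewrite /l2 -!map_comp.
have eA : (a0.1 * prodq l) * M%:~R ^+ s'.+1 = (numq (a0.1 * M%:~R) * prodz l2)%:~R.
  rewrite rmorphM /= (hMl _ (mem_head _ _)) prodz_eq ?hl; first by rewrite exprS; ring.
  by move=> p hp; apply: hMl; rewrite in_cons map_f ?orbT.
have hL : L s'.+1 (Cm (x a0.2) (map x (map snd l))).
  by have := Cm_L (x a0.2) (map x (map snd l)); rewrite !size_map hl.
rewrite (sig_lemma hs hL hM eA) -e1 d_comp mulVf ?d1 //.
by rewrite intr_eq0 gt_eqF.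
Qed.

Lemma main_in : fin_dim_lcs mul inv e delta s'.+1.
Proof.
pose I := ('I_r * s'.-tuple 'I_r)%type.
pose zs := fun j : 'I_#|{: I}| => Cm (x (enum_val j).1) (map x (enum_val j).2).
have hzs : forall j, L s'.+1 (zs j).
  by move=> j; have := Cm_L (x (enum_val j).1) (map x (enum_val j).2); rewrite size_map size_tuple.
exists #|{: I}|, zs; split; first exact: hzs.
move=> z /top_gen hz.
have hgen : forall c, Tk fx s' c -> exists j q, c = sg q (zs j).
  move=> c [a0 [l [hl ->]]].
  have ht : size (map snd l) == s' by rewrite size_map hl.
  exists (enum_rank ((a0.2, Tuple ht) : I)), (a0.1 * prodq l).
  rewrite /zs enum_rankK /=.
  case: (posnP s') => [hs0|hs]; last exact: gen_sig.
  move: hl; rewrite hs0 => /size0nil -> /=.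
  by rewrite /sigma /= mulr1.
have hx0 : s' = 0%N -> forall i, zs i = x (enum_val i).1.
  move=> hs0 i; rewrite /zs; case: (enum_val i) => [i0 t] /=.
  have ht0 : size t = 0%N by rewrite size_tuple hs0.
  by rewrite (size0nil ht0).
apply: (rep_gen _ _ _ hgen hz).
- move=> i q q'; case: (posnP s') => [hs0|hs]; last exact: sig_add.
  by rewrite /sigma hs0 /= hx0 // HxV1.
- move=> i; case: (posnP s') => [hs0|hs]; last exact: sig0.
  by rewrite /sigma hs0 /= d0.
- move=> i q; case: (posnP s') => [hs0|hs]; last exact: sig_centr.
  apply: centr_top.
  by rewrite hs0.
Qed.

End Top.
End Delta.

End Grp.

Theorem mainTheorem6 (G : Type) (mul : G -> G -> G) (inv : G -> G) (e : G)
  (HG : is_group mul inv e) (delta : rat -> G -> G)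
  (Hdelta : Qscalable mul e delta) (s : nat)
  (Hstep : nilpotent_step mul inv e s)
  (r : nat) (x : 'I_r -> G) (HxV1 : forall i, V1 mul delta (x i))
  (Hgen : forall g, gen mul inv e
            (fun y => exists (q : rat) (i : 'I_r), y = delta q (x i)) g) :
  fin_dim_lcs mul inv e delta s.
Proof.
case: Hstep => Htop [z0 [hz0 hne]].
move: Htop hz0; case: s => [|s'] Htop hz0.
  by exfalso; apply: hne; apply: Htop.
exact: (main_in HG Hdelta Htop HxV1 Hgen).
Qed.
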